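(* If $n$ is a positive integer, then $$\sum_{k = 1}^n \sum_{j = 0}^{k - 1} \frac{( - 1)^{n - j} ( n - j)!}{( n - j + 1)( k - j)}\left\{ {n \atop n - j} \right\} = - \frac{n}{2}B_{n - 1} .$$
   Context: $\left\{ {n \atop m} \right\}$ denotes the Stirling number of the second kind. $B_n$ are the Bernoulli numbers, defined by $\frac{t}{e^t-1}=\sum_{n\ge0}B_n\frac{t^n}{n!}$ (so $B_0=1$, $B_1=-1/2$). *)

(* Defs.v *)
From mathcomp Require Import all_boot all_order all_algebra.
Set Implicit Arguments. Unset Strict Implicit. Unset Printing Implicit Defensive.
Import Order.TTheory GRing.Theory Num.Theory.
Local Open Scope ring_scope.

Fixpoint stirling2 (n k : nat) : nat :=
  match n, k with
  | 0, 0 => 1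
  | 0, _.+1 => 0
  | _.+1, 0 => 0
  | n'.+1, k'.+1 => (k'.+1 * stirling2 n' k'.+1 + stirling2 n' k')%N
  end.

(* Bernoulli numbers with B_1 = -1/2, i.e. t/(e^t-1) = sum B_n t^n/n!.
   Coefficient comparison in t = (e^t - 1) * sum B_n t^n/n! gives
   B_0 = 1 and  sum_{k=0}^{m} C(m+1,k) B_k = 0 for m >= 1. *)
Fixpoint bernoulli_list (m : nat) : seq rat :=
  match m with
  | 0 => [:: 1]
  | m'.+1 =>
      let s := bernoulli_list m' in
      rcons s (- (\sum_(k < m'.+2 | (k < m'.+1)%N) ('C(m'.+2, k))%:R * nth 0 s k)
                 / (m'.+2)%:R)
  end.

Definition bernoulli (n : nat) : rat := nth 0 (bernoulli_list n) n.

(* Main.v *)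
Require Import Defs.
From mathcomp Require Import all_boot all_order all_algebra.
From mathcomp Require Import ring lra zify.
From Stdlib Require Import FunctionalExtensionality.
Import Order.TTheory GRing.Theory Num.Theory.
Local Open Scope ring_scope.

Definition T (c : nat -> rat) : nat -> rat :=
  fun m => m%:R * c m - (m.+1)%:R * c m.+1.
Definition M (c : nat -> rat) : nat -> rat :=
  fun m => - \sum_(0 <= i < m) c i / (m - i)%:R.
Definition E (c : nat -> rat) : nat -> rat :=
  fun m => c m - (if m is m'.+1 then c m' else 0).
Definition P n c := iter n T c 0%N.

Lemma iterT_lin n a f g :
  iter n T (fun m => a * f m + g m) = (fun m => a * iter n T f m + iter n T g m).
Proof.
elim: n => [//|n IH] /=; rewrite IH; apply: functional_extensionality => m.
rewrite /T; ring.
Qed.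

Lemma P_lin n a f g : P n (fun m => a * f m + g m) = a * P n f + P n g.
Proof. by rewrite /P iterT_lin. Qed.

Lemma P_add n f g : P n (fun m => f m + g m) = P n f + P n g.
Proof.
rewrite -(mul1r (P n f)) -P_lin; congr P; apply: functional_extensionality => m.
by rewrite mul1r.
Qed.

Lemma P_scale n a f : P n (fun m => a * f m) = a * P n f.
Proof.
have -> : P n (fun m => a * f m) = P n (fun m => a * f m + (fun _ => 0) m).
  by congr P; apply: functional_extensionality => m; rewrite addr0.
rewrite P_lin; suff -> : P n (fun _ => 0) = 0 by rewrite addr0.
rewrite /P; elim: n => [//|n IH] /=.
have -> : iter n T (fun _ : nat => 0) = (fun _ => 0).
  elim: n {IH} => [//|n IH] /=; rewrite IH; apply: functional_extensionality => m.
  by rewrite /T !mulr0 subr0.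
by rewrite /T !mulr0 subr0.
Qed.

Lemma P_S n c : P n.+1 c = P n (T c).
Proof. by rewrite /P iterSr. Qed.

Lemma TE c : T (E c) = (fun m => E c m + E (T c) m).
Proof.
apply: functional_extensionality => -[|m]; rewrite /T /E /=.
  ring.
ring.
Qed.

Lemma TM c : T (M c) = (fun m => c m + M (T c) m).
Proof.
apply: functional_extensionality => m; rewrite /T /M.
rewrite big_nat_recr //=.
have hs : \sum_(0 <= i < m) (i%:R * c i - i.+1%:R * c i.+1) / (m - i)%:R
   = \sum_(0 <= i < m) (i%:R * c i / (m - i)%:R)
     - (\sum_(0 <= i < m) (i%:R * c i / (m.+1 - i)%:R) + m%:R * c m / (m.+1 - m)%:R).
  rewrite -big_nat_recr //=. rewrite big_nat_recl //= !mul0r add0r -sumrB.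
  by apply: eq_big_nat => i _; rewrite subSS mulrBl.
rewrite hs.
have h : \sum_(0 <= i < m) (m%:R * (c i / (m - i)%:R) - m.+1%:R * (c i / (m.+1 - i)%:R)
            - i%:R * c i / (m - i)%:R + i%:R * c i / (m.+1 - i)%:R) = 0.
  apply: big1_seq => i; rewrite mem_index_iota => /andP [_ im].
  have ha : (m - i)%:R != 0 :> rat by rewrite pnatr_eq0 subn_eq0 -ltnNge.
  have hb : (m.+1 - i)%:R != 0 :> rat by rewrite pnatr_eq0 subn_eq0 -ltnNge ltnW.
  have e1 : m%:R = (m - i)%:R + i%:R :> rat by rewrite -natrD subnK // ltnW.
  have e2 : m.+1%:R = (m.+1 - i)%:R + i%:R :> rat by rewrite -natrD subnK //; lia.
  rewrite e2 {1}e1; field; by rewrite ha hb.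
rewrite big_split /= !sumrB -!mulr_sumr in h.
have -> : (m.+1 - m)%N = 1%N by rewrite subSn // subnn.
move: h; set A := \sum_(0 <= i < m) _; set B := \sum_(0 <= i < m) _;
  set C := \sum_(0 <= i < m) _; set D := \sum_(0 <= i < m) _ => h.
apply/subr0_eq; transitivity (-(m%:R * A - m.+1%:R * B - C + D)); first by rewrite !divr1; ring.
by rewrite h oppr0.
Qed.

Lemma P_M n : forall c, P n (M c) = n%:R * P n.-1 c.
Proof.
elim: n => [|n IH] c.
  by rewrite /P /= /M big_geq // oppr0 mul0r.
rewrite P_S TM P_add IH; case: n {IH} => [|n] /=.
  by rewrite mul0r addr0 mul1r.
rewrite -P_S; ring.
Qed.

Lemma P_E n : forall c, P n (E c) = \sum_(k < n.+1) 'C(n, k)%:R * P k c.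
Proof.
elim: n => [|n IH] c.
  by rewrite big_ord1 /P /E /= subr0 mul1r.
rewrite P_S TE P_add !IH.
under [X in _ + X = _]eq_bigr => k _ do rewrite -P_S.
rewrite [RHS]big_ord_recl [X in X + _ = _]big_ord_recl /= !bin0.
rewrite /bump /=.
under [X in _ = _ + X]eq_bigr => k _ do rewrite add1n binS natrD mulrDl.
rewrite big_split /= [X in _ = _ + (X + _)]big_ord_recr /= bin_small // mul0r addr0.
under eq_bigr => k _ do rewrite add1n.
by rewrite addrA.
Qed.

Definition d (m : nat) : rat := (m.+1%:R)^-1.
Definition e0 (m : nat) : rat := (m == 0%N)%:R.

Lemma Ed : E d = (fun m => d m + M e0 m).
Proof.
apply: functional_extensionality => -[|m]; rewrite /E /M.
  by rewrite big_geq // oppr0 subr0 addr0.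
rewrite big_nat_recl // big1 ?addr0; last by move=> i _; rewrite /e0 /= mul0r.
by rewrite /e0 /= mul1r subn0 /d.
Qed.

Lemma P_e0 n : P n.+1 e0 = 0.
Proof.
rewrite P_S.
have -> : T e0 = (fun m => 0 * e0 m).
  apply: functional_extensionality => -[|m]; rewrite /T /e0 /=; ring.
by rewrite P_scale mul0r.
Qed.

Lemma rec n : \sum_(k < n.+1) 'C(n, k)%:R * P k d = P n d + (n == 1%N)%:R.
Proof.
rewrite -P_E Ed P_add P_M; congr (_ + _).
case: n => [|[|n]] /=; first by rewrite mul0r.
  by rewrite /P /= /e0 /= mul1r.
by rewrite P_e0 mulr0.
Qed.

Lemma bern_list m : bernoulli_list m = mkseq (fun k => P k d) m.+1.
Proof.
elim: m => [|m IH].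
  by rewrite /mkseq /= /P /= /d invr1.
rewrite /= IH [in RHS]mkseqS; congr rcons.
rewrite big_mkcond big_ord_recr /= ltnn addr0.
under eq_bigr => k _ do rewrite ltn_ord nth_mkseq //.
have hr := rec m.+2.
rewrite big_ord_recr big_ord_recr /= binn binSn mul1r addr0 in hr.
move: hr; set S := \sum_(i < m.+1) _; set p := P m.+1 d; set q := P m.+2 d => hr.
have -> : S = - (m.+2%:R * p).
  apply: (addIr (m.+2%:R * p)); rewrite addNr; apply: (addIr q); by rewrite add0r.
by rewrite opprK mulrC mulrA mulVf ?mul1r // pnatr_eq0.
Qed.

Lemma bernP n : bernoulli n = P n d.
Proof. by rewrite /bernoulli bern_list nth_mkseq. Qed.

Lemma stir0 n : forall m, (n < m)%N -> stirling2 n m = 0%N.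
Proof.
elim: n => [|n IH] [|m] //= h.
by rewrite !IH // ?muln0 // ltnW.
Qed.

Definition sgf (n m : nat) : rat := (-1) ^+ m * (m`!)%:R * (stirling2 n m)%:R.

Lemma stirP n : forall c : nat -> rat, \sum_(m < n.+1) sgf n m * c m = P n c.
Proof.
elim: n => [|n IH] c.
  by rewrite big_ord1 /sgf /P /= expr0 !mul1r.
rewrite P_S -IH big_ord_recl /= {1}/sgf /= mulr0n mulr0 mul0r add0r /bump /=.
under eq_bigr => i _ do rewrite add1n /sgf /= natrD natrM factS natrM exprS !mulrDr !mulrDl.
rewrite big_split /=.
under [X in _ = X]eq_bigr => i _ do rewrite /T mulrBr.
rewrite sumrB /=; congr (_ + _).
  rewrite big_ord_recr /= stir0 // mulr0n !mulr0 mul0r addr0.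
  rewrite [RHS]big_ord_recl /= mul0r mulr0 add0r /bump /=.
  by apply: eq_bigr => i _; rewrite add1n /sgf /= factS natrM exprS; ring.
rewrite -sumrN; apply: eq_bigr => i _; rewrite /sgf; ring.
Qed.

Definition H (p : nat) : rat := \sum_(0 <= i < p) ((i.+1)%:R)^-1.

Lemma Md m : -(1/2) * M d m = H m / m.+1%:R.
Proof.
rewrite /M mulrN mulNr opprK.
have e : \sum_(0 <= i < m) d i / (m - i)%:R
   = \sum_(0 <= i < m) (((i.+1)%:R)^-1 + ((m - i)%:R)^-1) / m.+1%:R.
  apply: eq_big_nat => i /andP [_ im].
  have ha : (m - i)%:R != 0 :> rat by rewrite pnatr_eq0 subn_eq0 -ltnNge.
  have hb : (m.+1)%:R != 0 :> rat by rewrite pnatr_eq0.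
  have hc : (i.+1)%:R != 0 :> rat by rewrite pnatr_eq0.
  have e1 : m.+1%:R = (m - i)%:R + i.+1%:R :> rat by rewrite -natrD addnS subnK // ltnW.
  rewrite /d e1; rewrite e1 in hb; move: ha hc hb.
  set a := (m - i)%:R; set b := i.+1%:R => ha hc hb.
  clearbody a b; by field; rewrite ha hc hb.
have e2 : \sum_(0 <= i < m) ((m - i)%:R)^-1 = H m :> rat.
  rewrite /H big_nat_rev /=; apply: eq_big_nat => i /andP [_ im].
  by rewrite add0n subKn.
rewrite e -mulr_suml big_split /= e2 /H; field.
by rewrite addrC natr1 pnatr_eq0.
Qed.

Lemma tri_swap N (F : nat -> nat -> rat) :
  \sum_(1 <= k < N.+1) \sum_(0 <= j < k) F j k
  = \sum_(0 <= j < N) \sum_(j.+1 <= k < N.+1) F j k.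
Proof.
elim: N => [|N IH]; first by rewrite !big_geq.
rewrite big_nat_recr //= IH [RHS]big_nat_recr //=.
rewrite [X in _ = _ + X]big_nat_recr //= [X in _ = _ + (X + _)]big_geq // add0r.
have -> : \sum_(0 <= j < N) \sum_(j.+1 <= k < N.+2) F j k
   = \sum_(0 <= j < N) \sum_(j.+1 <= k < N.+1) F j k + \sum_(0 <= j < N) F j N.+1.
  rewrite -big_split /=; apply: eq_big_nat => j /andP [_ jN]; rewrite big_nat_recr //; exact: ltnW.
by rewrite (big_nat_recr N 0 (fun j => F j N.+1)) //= addrA.
Qed.

Theorem proposition7 (n : nat) (hn : (0 < n)%N) :
  \sum_(1 <= k < n.+1) \sum_(0 <= j < k)
     ((-1) ^+ (n - j) * ((n - j)`!)%:R * (stirling2 n (n - j))%:R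
        / (((n - j + 1)%:R : rat) * (k - j)%:R))
  = - (n%:R / 2) * bernoulli n.-1.
Proof.
set G := fun j => (-1) ^+ (n - j) * ((n - j)`!)%:R * (stirling2 n (n - j))%:R
        / ((n - j + 1)%:R : rat).
have -> : \sum_(1 <= k < n.+1) \sum_(0 <= j < k)
     ((-1) ^+ (n - j) * ((n - j)`!)%:R * (stirling2 n (n - j))%:R
        / (((n - j + 1)%:R : rat) * (k - j)%:R))
   = \sum_(1 <= k < n.+1) \sum_(0 <= j < k) G j * ((k - j)%:R)^-1.
  apply: eq_bigr => k _; apply: eq_bigr => j _; by rewrite /G invfM mulrA.
rewrite tri_swap.
have -> : \sum_(0 <= j < n) \sum_(j.+1 <= k < n.+1) G j * ((k - j)%:R)^-1
   = \sum_(0 <= j < n) G j * H (n - j).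
  apply: eq_big_nat => j /andP [_ jn]; rewrite -mulr_sumr; congr (_ * _).
  rewrite -add1n big_addn subSn ?(ltnW jn) // big_add1 /H /=.
  by apply: eq_big_nat => i _; rewrite addnK.
rewrite big_nat_rev /= big_mkord.
have -> : - (n%:R / 2) * bernoulli n.-1
   = \sum_(m < n.+1) sgf n m * (H m / m.+1%:R).
  under eq_bigr => m _ do rewrite -Md.
  by rewrite (stirP n (fun m => -(1/2) * M d m)) P_scale P_M bernP; field.
rewrite big_ord_recl /= /H big_geq // mul0r mulr0 add0r -/H.
apply: eq_bigr => i _; rewrite /bump /= add1n /G /sgf.
have hi := ltn_ord i.
rewrite add0n subKn // addn1; field.
have := ler0n rat i; move=> h0; apply/eqP => h; lra.
Qed.
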